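(* If $\mathcal{O}$ is a D-cube, then the L-graph $\mathcal{L}_{\mathcal{O}}(\emptyset)$ is acyclic.
   Context: For sets $U,V$ let $U\oplus V=(U\cup V)\setminus(U\cap V)$. An $n$-cube orientation is a directed graph $\mathcal{O}$ on the vertex set of all subsets of $[n]$ containing, for each vertex $V$ and $i\in[n]$, exactly one of the directed edges $(V,V\oplus\{i\})$, $(V\oplus\{i\},V)$; its outmap is $\phi(V)=\{i: (V,V\oplus\{i\})\in\mathcal{O}\}$. For a vertex $V$, the L-graph $\mathcal{L}_{\mathcal{O}}(V)$ has vertex set $[n]\setminus V$ and an arc $(i,j)$ for distinct $i,j\notin V$ whenever $j\in\phi(V)\oplus\phi(V\cup\{i\})$; in particular $\mathcal{L}_{\mathcal{O}}(\emptyset)$ has vertex set $[n]$. Given $M\in\mathbb{R}^{n\times n}$ and $V\subseteq[n]$, let $M(V)$ be the matrix whose $i$-th column is $-M_i$ if $i\in V$ and the $i$-th unit vector if $i\notin V$. A D-cube is an $n$-cube orientation with outmap $\phi(V)=\{i\in[n]: (M(V)^{-1}\mathbf{q})_i<0\}$, where $M$ is symmetric positive definite and $\mathbf{q}\in\mathbb{R}^n$ is generic, i.e. no entry of $M(V)^{-1}\mathbf{q}$ is zero for any $V\subseteq[n]$. (Such an orientation is a unique sink orientation.) *)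

(* Defs.v *)
From HB Require Import structures.
From mathcomp Require Import all_boot all_order all_algebra.
Set Implicit Arguments. Unset Strict Implicit. Unset Printing Implicit Defensive.
Import Order.TTheory GRing.Theory Num.Theory.
Local Open Scope ring_scope.

Definition symdiff (T : finType) (U V : {set T}) : {set T} :=
  (U :|: V) :\: (U :&: V).

Definition sym_posdef (R : realFieldType) (n : nat) (M : 'M[R]_n) : Prop :=
  M^T = M /\ forall x : 'cV[R]_n, x != 0 -> 0 < (x^T *m M *m x) 0 0.

Definition MV (R : realFieldType) (n : nat) (M : 'M[R]_n) (V : {set 'I_n}) : 'M[R]_n :=
  \matrix_(r, c) (if c \in V then - M r c else (r == c)%:R).

Definition generic_q (R : realFieldType) (n : nat) (M : 'M[R]_n) (q : 'cV[R]_n) : Prop :=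
  forall (V : {set 'I_n}) (i : 'I_n), (invmx (MV M V) *m q) i 0 != 0.

Definition Dcube_outmap (R : realFieldType) (n : nat) (M : 'M[R]_n) (q : 'cV[R]_n)
  (V : {set 'I_n}) : {set 'I_n} :=
  [set i | (invmx (MV M V) *m q) i 0 < 0].

Definition Lgraph (n : nat) (phi : {set 'I_n} -> {set 'I_n}) (V : {set 'I_n}) : rel 'I_n :=
  fun i j => [&& i \notin V, j \notin V, i != j & j \in symdiff (phi V) (phi (i |: V))].

Definition acyclic (T : finType) (e : rel T) : Prop :=
  ~ exists (x : T) (p : seq T), [/\ p != [::], path e x p & last x p = x].

(* Main.v *)
Require Import Defs.
From HB Require Import structures.
From mathcomp Require Import all_boot all_order all_algebra.
From mathcomp Require Import ring lra.
Set Implicit Arguments. Unset Strict Implicit. Unset Printing Implicit Defensive.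
Import Order.TTheory GRing.Theory Num.Theory.
Local Open Scope ring_scope.
Lemma quad2 (R : realFieldType) n (M : 'M[R]_n) i j (a b : R) :
  let x := a *: delta_mx i 0 + b *: delta_mx j 0 : 'cV_n in
  (x^T *m M *m x) 0 0 = a*a*M i i + a*b*M i j + b*a*M j i + b*b*M j j.
Proof.
move=> x.
have tx : x^T = a *: delta_mx 0 i + b *: delta_mx 0 j.
  by apply/matrixP=> r c; rewrite !mxE !(ord1 r) !eqxx !andbT. 
rewrite tx /x !(mulmxDl, mulmxDr) -!scalemxAl -!scalemxAr -!rowE -!colE.
rewrite !(mxE, big_ord1). lra.
Qed.

Lemma MV1_mul (R : realFieldType) n (M : 'M[R]_n) i (y : 'cV_n) r :
  (MV M [set i] *m y) r 0 = (if r == i then 0 else y r 0) - M r i * y i 0.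
Proof.
rewrite mxE (bigD1 i) //= !mxE in_set1 eqxx.
rewrite (eq_bigr (fun k => (r == k)%:R * y k 0)); last first.
  by move=> k /negbTE ki; rewrite mxE in_set1 ki.
case: eqP => [->|/eqP ri].
- rewrite big1 ?addr0 ?sub0r ?mulNr //.
  by move=> k ki; rewrite eq_sym (negbTE ki) mul0r.
- rewrite (bigD1 r) //= eqxx mul1r big1 ?addr0 ?mulNr ?[_ + y r 0]addrC //.
  by move=> k /andP[_ kr]; rewrite eq_sym (negbTE kr) mul0r.
Qed.

Definition xsol (R : realFieldType) n (M : 'M[R]_n) i (y : 'cV_n) : 'cV_n :=
  \col_k (if k == i then - y i 0 / M i i else y k 0 - M k i * y i 0 / M i i).

Lemma xsolP (R : realFieldType) n (M : 'M[R]_n) i (y : 'cV_n) :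
  M i i != 0 -> MV M [set i] *m xsol M i y = y.
Proof.
move=> ha; apply/matrixP=> r c; rewrite (ord1 c) MV1_mul !mxE eqxx.
by case: eqP => [->|_]; field.
Qed.

Lemma MV1_unit (R : realFieldType) n (M : 'M[R]_n) i :
  M i i != 0 -> MV M [set i] \in unitmx.
Proof.
move=> ha.
pose B : 'M_n := \matrix_(k, c) (xsol M i (col c 1%:M) k 0).
suff /mulmx1_unit[] : MV M [set i] *m B = 1%:M by [].
apply/matrixP=> r c.
transitivity ((MV M [set i] *m col c B) r 0).
  by rewrite !mxE; apply: eq_bigr => k _; rewrite !mxE.
have -> : col c B = xsol M i (col c 1%:M).
  by apply/matrixP=> k l; rewrite (ord1 l) !mxE.
by rewrite xsolP // mxE.
Qed.

Lemma MV0 (R : realFieldType) n (M : 'M[R]_n) : MV M set0 = 1%:M.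
Proof. by apply/matrixP=> r c; rewrite !mxE in_set0. Qed.

Lemma posq (R : realFieldType) n (M : 'M[R]_n) i j (a b : R) :
  sym_posdef M -> (a *: delta_mx i 0 + b *: delta_mx j 0 : 'cV_n) != 0 ->
  0 < a*a*M i i + a*b*M i j + b*a*M j i + b*b*M j j.
Proof. by move=> [_ P] /P; rewrite quad2. Qed.

Lemma diag_pos (R : realFieldType) n (M : 'M[R]_n) i :
  sym_posdef M -> 0 < M i i.
Proof.
move=> P; have := @posq _ _ M i i 1 0 P.
rewrite !mul0r !mulr0 !addr0 !mul1r mul0r addr0; apply.
apply/eqP=> /(congr1 (fun A : 'cV_n => A i 0)); rewrite !mxE !eqxx /=.
by rewrite mul0r addr0 mulr1 => /eqP; rewrite oner_eq0.
Qed.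

Lemma offdiag (R : realFieldType) n (M : 'M[R]_n) i j :
  sym_posdef M -> i != j -> M j i ^+ 2 < M i i * M j j.
Proof.
move=> P ij.
have sym : M j i = M i j.
  by case: P => /(congr1 (fun A : 'M_n => A i j)); rewrite mxE.
have ha := diag_pos i P.
have := @posq _ _ M i j (M i j) (- M i i) P.
rewrite sym => H.
have : 0 < M i i * (M i i * M j j - M i j ^+ 2).
  rewrite (_ : _ * _ = M i j * M i j * M i i + M i j * - M i i * M i j +
     - M i i * M i j * M i j + - M i i * - M i i * M j j); last by ring.
  apply: H; apply/eqP=> /(congr1 (fun A : 'cV_n => A j 0)); rewrite !mxE !eqxx /=.
  rewrite eq_sym (negbTE ij) /= mulr0 add0r mulr1 => /eqP.
  by rewrite oppr_eq0 (gt_eqF ha).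
by rewrite pmulr_rgt0 // subr_gt0.
Qed.

Lemma ineq (R : realFieldType) (a b m c d : R) :
  0 < a -> 0 < b -> m ^+ 2 < a * b ->
  ~~ ((d < 0) && (d - m * c / a < 0)) && ((d < 0) || (d - m * c / a < 0)) ->
  d ^+ 2 / b < c ^+ 2 / a.
Proof.
move=> ha hb hm H.
set t := m * c / a.
have ht : t * a = m * c by rewrite /t; field; rewrite gt_eqF.
have [h1 h2] : d ^+ 2 <= t ^+ 2 /\ t != 0.
  case: (ltP d 0) H => hd; case: (ltP (d - t) 0) => hdt //= _.
  - split; first nra. by apply/eqP=> t0; move: hdt; rewrite t0 subr0 leNgt hd.
  - split; first nra. by apply/eqP=> t0; move: hdt; rewrite t0 subr0 ltNge hd.
have hc : c != 0 by apply/eqP=> c0; move: ht; rewrite c0 mulr0 => /eqP; rewrite mulf_eq0 (negbTE h2) (gt_eqF ha).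
have hc2 : 0 < c ^+ 2 by rewrite lt_neqAle sqr_ge0 andbT eq_sym sqrf_eq0.
rewrite ltr_pdivrMr // mulrAC ltr_pdivlMr //.
have e1 : d ^+ 2 * a ^+ 2 <= m ^+ 2 * c ^+ 2.
  rewrite -[m ^+ 2 * c ^+ 2]exprMn -ht exprMn. by apply: ler_wpM2r; [apply: sqr_ge0|].
have e2 : m ^+ 2 * c ^+ 2 < a * b * c ^+ 2 by rewrite ltr_pM2r.
have e3 : (d ^+ 2 * a) * a < (c ^+ 2 * b) * a.
  rewrite (_ : _ * a = d ^+ 2 * a ^+ 2); last by ring.
  rewrite (_ : _ * a = a * b * c ^+ 2); last by ring.
  exact: le_lt_trans e2.
by rewrite ltr_pM2r in e3.
Qed.

Theorem lemma5p3 (R : realFieldType) (n : nat) (M : 'M[R]_n) (q : 'cV[R]_n) :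
  sym_posdef M -> generic_q M q ->
  acyclic (Lgraph (Dcube_outmap M q) set0).
Proof.
move=> P _.
pose f k := q k 0 ^+ 2 / M k k.
have arc i j : Lgraph (Dcube_outmap M q) set0 i j -> f j < f i.
  move=> /and4P[_ _ ij hj].
  have ha := diag_pos i P.
  have hx : invmx (MV M [set i]) *m q = xsol M i q.
    by rewrite -{1}(@xsolP _ _ M i q (lt0r_neq0 ha)) mulKmx // MV1_unit // lt0r_neq0.
  move: hj; rewrite /symdiff /Dcube_outmap MV0 invmx1 mul1mx setU0 hx !inE.
  rewrite !mxE eq_sym (negbTE ij) => hj.
  exact: (ineq ha (diag_pos j P) (offdiag P ij) hj).
have pl y p : path (Lgraph (Dcube_outmap M q) set0) y p -> f (last y p) <= f y.
  elim: p y => [|z p IH] y //= /andP[e pz].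
  exact: le_trans (IH _ pz) (ltW (arc _ _ e)).
move=> [x [[|z p] [pn pth lst]]] //; move: pth => /= /andP[e pz].
have := le_lt_trans (pl _ _ pz) (arc _ _ e).
by move: lst => /= ->; rewrite ltxx.
Qed.
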